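(* Let $\mathbf{F}_q$ have characteristic $p$, let $c\ge3$, and let $a_1=0,a_2=1,a_3,\dots,a_c$ be distinct elements of $\mathbf{F}_q$; put $D=\mathbf{F}_q\setminus\{a_1,\dots,a_c\}$. Then for every integer $1\le k\le q-c$ and every $b\in\mathbf{F}_q$, $$N(k,b,D)-\frac1q\binom{q-c}{k}=\frac1q(-1)^kR^c_k-(-1)^k\sum_{i_1=0}^{k}\sum_{i_2=0}^{k-i_1}\cdots\sum_{i_{c-2}=0}^{k-i_1-\cdots-i_{c-3}}S\Big(k-\sum_{j=1}^{c-2}i_j,\ k-\sum_{j=1}^{c-2}i_j-b+\sum_{j=1}^{c-2}i_ja_{c+1-j}\Big),$$ where the second argument of $S$ is computed in $\mathbf{F}_q$ (integers mapped into $\mathbf{F}_p$). Moreover, if $b,a_2,\dots,a_c$ are linearly independent over $\mathbf{F}_p$, then $$N(k,b,D)=\frac1q\binom{q-c}{k}+\frac1q(-1)^kR^c_k.$$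
   Context: $N(k,b,D)$ denotes the number of $k$-element subsets $\{x_1,\dots,x_k\}\subseteq D$ with $x_1+\dots+x_k=b$. Binomial coefficients $\binom{x}{m}=x(x-1)\cdots(x-m+1)/m!$ for real $x$, integer $m\ge0$. $R^1_j=-(-1)^{\lfloor j/p\rfloor}\binom{q/p-1}{\lfloor j/p\rfloor}$ for integers $j\ge0$, and $R^c_k=\sum_{j=0}^kR^{c-1}_j$ for $c\ge2$. For an integer $k\ge0$ and $e\in\mathbf{F}_q$: if $e\in\mathbf{F}_p$, $S(k,e)=\sum_{0\le i\le k,\ i\equiv e\ (\mathrm{mod}\ p)}R^1_i$ (sum over integers $i$ whose image in $\mathbf{F}_p$ is $e$); if $e\notin\mathbf{F}_p$, $S(k,e)=0$. *)

(* Defs.v *)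
From HB Require Import structures.
From mathcomp Require Import all_boot all_order all_algebra all_field.
Set Implicit Arguments. Unset Strict Implicit. Unset Printing Implicit Defensive.
Import Order.TTheory GRing.Theory Num.Theory.
Local Open Scope ring_scope.

Definition Ncount (F : finFieldType) (k : nat) (b : F) (D : {set F}) : nat :=
  #|[set A : {set F} | [&& A \subset D, #|A| == k & \sum_(x in A) x == b]]|.

(* R^1_j = -(-1)^{floor(j/p)} binom(q/p - 1, floor(j/p)), q = #|F| *)
Definition R1 (p q j : nat) : rat :=
  - ((-1) ^+ (j %/ p)%N * ('C(q %/ p - 1, j %/ p))%:R).

(* Rsh n k = R^{n+1}_k *)
Fixpoint Rsh (p q n k : nat) : rat :=
  if n is n'.+1 then \sum_(j < k.+1) Rsh p q n' j else R1 p q k.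

(* R^c_k for c >= 1 *)
Definition R (p q c k : nat) : rat := Rsh p q c.-1 k.

Definition S (F : finFieldType) (p : nat) (k : nat) (e : F) : rat :=
  if [exists i : 'I_p, e == (i : nat)%:R]
  then \sum_(i < k.+1 | ((i : nat)%:R == e :> F)) R1 p #|F| i
  else 0.

(* Main.v *)
Require Import Defs.
From HB Require Import structures.
From mathcomp Require Import all_boot all_order all_algebra all_field.
Set Implicit Arguments. Unset Strict Implicit. Unset Printing Implicit Defensive.
Import Order.TTheory GRing.Theory Num.Theory.
Local Open Scope ring_scope.

Lemma Ncount0 (F : finFieldType) (b : F) D : Ncount 0 b D = nat_of_bool (b == 0).
Proof.
rewrite /Ncount.
have -> : [set A : {set F} | [&& A \subset D, #|A| == 0%N & \sum_(x in A) x == b]]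
   = if b == 0 then [set set0] else set0.
  apply/setP=> A; rewrite !inE; case: (boolP (#|A| == 0%N)) => [/eqP/cards0_eq ->|nA].
    rewrite sub0set big_set0 eq_sym; case: (b == 0); rewrite ?in_set1 ?in_set0 ?eqxx //.
  rewrite andbF /=; case: (b == 0); rewrite ?in_set1 ?in_set0 //.
  by apply/esym/negbTE/eqP=> EA; move: nA; rewrite EA cards0.
by case: (b == 0); rewrite ?cards1 ?cards0.
Qed.

Lemma Nremove (F : finFieldType) (D : {set F}) (a : F) k b : a \in D ->
  Ncount k.+1 b D = (Ncount k.+1 b (D :\ a) + Ncount k (b - a)%R (D :\ a))%N.
Proof.
move=> aD; rewrite /Ncount.
set X := [set A : {set F} | _].
rewrite -(cardsID [set A : {set F} | a \in A] X) addnC; congr (_ + _)%N.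
  apply: eq_card => A; rewrite !inE; apply/idP/idP.
    case/and4P=> aA sAD cA sA; rewrite cA sA !andbT.
    apply/subsetP=> x xA; rewrite !inE (subsetP sAD) // andbT.
    by apply/negP=> /eqP ex; move: aA; rewrite -ex xA.
  case/and3P=> sAD cA sA; apply/and4P; split => //.
    by apply/negP=> aA; move: (subsetP sAD a aA); rewrite !inE eqxx.
  by apply: subset_trans sAD (subsetDl _ _).
set Y := [set B : {set F} | [&& B \subset D :\ a, _ & _]].
have -> : X :&: [set A : {set F} | a \in A] = (fun B => a |: B) @: Y.
  apply/setP=> A; rewrite !inE; apply/idP/idP.
    case/andP=> /and3P[sAD /eqP cA /eqP sA] aA.
    apply/imsetP; exists (A :\ a); last by rewrite setD1K.
    rewrite !inE; apply/and3P; split.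
    - by apply: setSD.
    - by rewrite (cardsD1 a A) aA add1n in cA; case: cA => ->.
    - by rewrite -sA (big_setD1 a aA) /= addrC addrK.
  case/imsetP=> B; rewrite !inE => /and3P[sBD /eqP cB /eqP sB] ->.
  have aB : a \notin B by apply/negP=> /(subsetP sBD); rewrite !inE eqxx.
  rewrite setU11 andbT cardsU1 aB cB eqxx /= big_setU1 //= sB addrC subrK eqxx andbT.
  apply/subsetP=> x; rewrite !inE => /orP[/eqP -> //| /(subsetP sBD)].
  by rewrite !inE => /andP[].
rewrite card_in_imset //.
move=> B1 B2; rewrite !inE => /and3P[s1 _ _] /and3P[s2 _ _] E.
have n1 : a \notin B1 by apply/negP=> /(subsetP s1); rewrite !inE eqxx.
have n2 : a \notin B2 by apply/negP=> /(subsetP s2); rewrite !inE eqxx.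
by rewrite -(setU1K n1) -(setU1K n2) E.
Qed.

Lemma Ntrans (F : finFieldType) (D : {set F}) (t : F) k b :
  Ncount k b D = Ncount k (b + t *+ k) [set x + t | x in D].
Proof.
rewrite /Ncount.
have inj : injective (fun x : F => x + t) by apply: addIr.
rewrite -[X in _ = X](card_preimset _ (imset_inj inj)); apply: eq_card => A.
rewrite !inE /= (card_imset _ inj) big_imset /=; last by move=> x y _ _; apply: inj.
have -> : ([set x + t | x in A] \subset [set x + t | x in D]) = (A \subset D).
  apply/idP/idP; last exact: imsetS.
  move/subsetP=> H; apply/subsetP=> x xA.
  by rewrite -(mem_imset _ _ inj) H // (mem_imset _ _ inj).
rewrite big_split /= sumr_const.
case: (boolP (#|A| == k)) => [/eqP ->|]; last by rewrite !andFb !andbF.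
by rewrite (inj_eq (addIr _)).
Qed.

Lemma card_setP (T : finType) (P Q : pred T) :
  #|[set x | Q x && P x]| = (\sum_(x | P x) (Q x : nat))%N.
Proof.
rewrite -sum1_card big_mkcond [RHS]big_mkcond /=; apply: eq_bigr => x _.
by rewrite inE; case: (P x); case: (Q x).
Qed.

Lemma NcountE (F : finFieldType) k (b : F) D :
  Ncount k b D = (\sum_(A : {set F} | (#|A| == k) && ((\sum_(x in A) x)%R == b))
                    (A \subset D : nat))%N.
Proof. by rewrite /Ncount -card_setP. Qed.

Lemma Nsum_b (F : finFieldType) k :
  (\sum_(b : F) Ncount k b setT)%N = 'C(#|F|, k).
Proof.
under eq_bigr do rewrite NcountE big_mkcond /=.
rewrite exchange_big /= -card_draws -sum1_card.
rewrite [RHS]big_mkcond /=; apply: eq_bigr => A _.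
rewrite inE subsetT; case: (#|A| == k) => /=; last by rewrite big1.
rewrite (bigD1 (\sum_(x in A) x)) //= eqxx big1 ?addn0 // => b.
by rewrite eq_sym => /negbTE ->.
Qed.

Lemma setT_trans (F : finFieldType) (t : F) : [set x + t | x in setT] = setT.
Proof.
apply/setP=> x; rewrite inE; apply/imsetP; exists (x - t); first by rewrite inE.
by rewrite subrK.
Qed.

Lemma setD1_trans (F : finFieldType) (t u : F) :
  [set x + t | x in setT :\ u] = setT :\ (u + t).
Proof.
apply/setP=> x; rewrite !inE andbT; apply/imsetP/idP.
  case=> y; rewrite !inE andbT => yu ->; by rewrite (inj_eq (addIr _)).
move=> xu; exists (x - t); last by rewrite subrK.
by rewrite !inE andbT; apply: contra xu => /eqP <-; rewrite subrK.
Qed.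

Lemma Nunif (F : finFieldType) k (b : F) : (k%:R : F) != 0 ->
  Ncount k b setT = Ncount k (0 : F) setT.
Proof.
move=> k0; rewrite (@Ntrans F setT (- b / k%:R) k b) (setT_trans (- b / k%:R)).
by rewrite -(mulr_natr (- b / k%:R) k) divfK // addrN.
Qed.

Lemma Nunif_val (F : finFieldType) k (b : F) : (k%:R : F) != 0 ->
  (#|F| * Ncount k b setT)%N = 'C(#|F|, k).
Proof.
move=> k0; rewrite -Nsum_b (Nunif b k0).
rewrite (eq_bigr (fun _ => Ncount k (0 : F) setT)); last by move=> c _; rewrite (Nunif c k0).
by rewrite sum_nat_const.
Qed.

Lemma Ndouble (F : finFieldType) k (b : F) :
  (\sum_(t : F) Ncount k b (setT :\ t))%N = ((#|F| - k) * Ncount k b setT)%N.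
Proof.
under eq_bigr do rewrite NcountE.
rewrite exchange_big /= NcountE big_distrr /=; apply: eq_bigr => A /andP[/eqP cA _].
rewrite subsetT muln1 -cA -(cardsC A) addKn -sum1_card [RHS]big_mkcond /=.
apply: eq_bigr => t _; rewrite !inE.
case: (boolP (t \in A)) => tA /=.
  suff -> : (A \subset [set: F] :\ t) = false by [].
  by apply/negP => /subsetP /(_ t tA); rewrite !inE eqxx.
suff -> : (A \subset [set: F] :\ t) = true by [].
by apply/subsetP => x xA; rewrite !inE andbT; apply: contra tA => /eqP <-.
Qed.
Lemma pdvdq (F : finFieldType) (p : nat) (hp : p \in [pchar F]) : (p %| #|F|)%N.
Proof.
have := card_pprimeChar hp.
rewrite /= => E. rewrite [#|F|]E.
have pp := pcharf_prime hp.
case: (logn p #|pPrimeCharType hp|) E => [|n] E; last by rewrite expnS dvdn_mulr.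
exfalso; move: E; rewrite expn0 => E.
have : #|F| = 1%N by [].
by move: (card_finNzRing_gt1 F) => /[swap] ->.
Qed.

Lemma lin_step (x y a0 a1 b0 b1 X qi : rat) : x != 0 ->
  x * a1 = y * a0 -> x * b1 = y * b0 ->
  y / x * (a0 * qi + b0 * X) = a1 * qi + b1 * X.
Proof.
move=> x0 Ha Hb; rewrite mulrDr !mulrA.
by rewrite [y / x * a0]mulrAC -Ha [y / x * b0]mulrAC -Hb ![x * _]mulrC !mulfK.
Qed.

Lemma Ntrans_star (F : finFieldType) p (hp : p \in [pchar F]) k (b t : F) :
  (p %| k)%N -> Ncount k b (setT :\ t) = Ncount k b (setT :\ 0).
Proof.
move=> pk; rewrite (@Ntrans F (setT :\ 0) t k b) setD1_trans add0r.
have -> : t *+ k = 0 by rewrite -mulr_natr; move: pk; rewrite (dvdn_pcharf hp) => /eqP ->; rewrite mulr0.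
by rewrite addr0.
Qed.

Lemma R1_step p q k : (0 < p)%N -> (p %| k.+1)%N -> (p %| q)%N ->
  (k.+1)%:R * ((-1) ^+ k.+1 * R1 p q k.+1) = (q - k.+1)%:R * ((-1) ^+ k * R1 p q k) :> rat.
Proof.
move=> p0 pk /dvdnP[m ->].
have kp : (k %/ p)%N = (k.+1 %/ p).-1 by rewrite divnS // pk.
case/dvdnP: pk kp => j Ek kp.
case: j Ek kp => [|j'] Ek kp; first by rewrite mul0n in Ek.
have E1 : (k.+1 %/ p = j'.+1)%N by rewrite Ek mulnK.
have E2 : (m * p - k.+1 = (m - j'.+1) * p)%N by rewrite Ek mulnBl.
rewrite E1 /= in kp.
rewrite /R1 E1 kp E2 mulnK // {1}Ek.
have H : (j'.+1 * 'C(m - 1, j'.+1) = (m - j'.+1) * 'C(m - 1, j'))%N.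
  by rewrite mul_bin_left -subnDA add1n.
rewrite !natrM !exprS !mulN1r !mulrNN !mulNr !mulrN; congr (- _).
rewrite -(mulrC p%:R) -(mulrC p%:R (m - j'.+1)%:R) -!mulrA; congr (_ * _).
rewrite mulrCA [X in _ = X]mulrCA; congr (_ * _).
rewrite mulrCA [X in _ = X]mulrCA; congr (_ * _).
by rewrite -!natrM H.
Qed.

Lemma R1_nstep p q k : (0 < p)%N -> ~~ (p %| k.+1)%N -> R1 p q k.+1 = R1 p q k.
Proof. by move=> p0 pk; rewrite /R1 divnS // (negbTE pk). Qed.

Lemma Nstar (F : finFieldType) p (hp : p \in [pchar F]) k (b : F) : (k < #|F|)%N ->
  (Ncount k b (setT :\ 0))%:R
  = ('C(#|F|.-1, k))%:R * (#|F|%:R)^-1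
    + ((-1) ^+ k * R1 p #|F| k) * ((#|F|%:R)^-1 - (b == 0)%:R) :> rat.
Proof.
set q := #|F|.
have q0 : (0 < q)%N by apply: leq_ltn_trans (card_finNzRing_gt1 F).
have pp := pcharf_prime hp.
have p0 : (0 < p)%N by apply: prime_gt0.
elim: k => [_|k IH kq].
  rewrite Ncount0 /R1 div0n !bin0 !expr0 !mul1r mulN1r opprB addrC subrK.
  by case: (b == 0).
have kq' : (k < q)%N by apply: ltnW.
have Hrem := @Nremove F setT 0 k b (in_setT 0).
rewrite subr0 in Hrem.
case: (boolP (p %| k.+1)%N) => pk.
- have Hd := @Ndouble F k.+1 b.
  rewrite (eq_bigr (fun _ => Ncount k.+1 b (setT :\ 0))) in Hd;
    last by move=> t _; apply: (Ntrans_star hp).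
  rewrite sum_nat_const in Hd. move: Hd; rewrite -/q => Hd.
  rewrite Hrem in Hd.
  have E : (k.+1 * Ncount k.+1 b (setT :\ 0%R) = (q - k.+1) * Ncount k b (setT :\ 0%R))%N.
    apply/eqP; rewrite -(eqn_add2l ((q - k.+1) * Ncount k.+1 b (setT :\ 0%R))).
    by rewrite -mulnDl subnK ?(ltnW kq) // Hd mulnDr.
  have k10 : ((k.+1)%:R : rat) != 0 by rewrite pnatr_eq0.
  have -> : (Ncount k.+1 b (setT :\ 0%R))%:R
            = (q - k.+1)%:R / (k.+1)%:R * (Ncount k b (setT :\ 0%R))%:R :> rat.
    by rewrite mulrAC -natrM -E natrM mulrC mulKf.
  rewrite IH //; apply: lin_step => //.
    rewrite -!natrM mul_bin_left; congr (_ %:R); congr (_ * _)%N.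
    by rewrite -subn1 -subnDA add1n.
  by apply: R1_step => //; apply: pdvdq hp.
- have k0 : ((k.+1)%:R : F) != 0 by rewrite -(dvdn_pcharf hp).
  have Hu := Nunif_val b k0.
  rewrite Hrem in Hu.
  have -> : (Ncount k.+1 b (setT :\ 0%R))%:R
            = 'C(q, k.+1)%:R / q%:R - (Ncount k b (setT :\ 0%R))%:R :> rat.
    by rewrite -Hu natrM mulrC mulKf ?pnatr_eq0 -?lt0n // natrD addrK.
  rewrite IH // R1_nstep // exprS mulN1r mulNr.
  rewrite -{1}(prednK q0) binS natrD mulrDl opprD addrA addrK.
  by rewrite mulNr.
Qed.

Lemma Nconv (F : finFieldType) (D : {set F}) (a : F) k b : a \in D ->
  (Ncount k b (D :\ a))%:R
  = \sum_(i < k.+1) (-1) ^+ i * (Ncount (k - i) (b - i%:R * a) D)%:R :> rat.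
Proof.
move=> aD; elim: k b => [|k IH] b.
  by rewrite big_ord1 /= !Ncount0 mul0r subr0 expr0 mul1r.
have H := Nremove k b aD.
have -> : (Ncount k.+1 b (D :\ a))%:R
   = (Ncount k.+1 b D)%:R - (Ncount k (b - a) (D :\ a))%:R :> rat.
  by rewrite H natrD addrK.
rewrite IH [RHS]big_ord_recl /= expr0 mul1r subn0 mul0r subr0; congr (_ + _).
rewrite -sumrN; apply: eq_bigr => i _.
rewrite /bump /= add1n subSS exprS mulN1r mulNr; congr (- (_ * _%:R)).
congr Ncount; rewrite -natr1 mulrDl mul1r opprD addrA; by rewrite addrAC.
Qed.

Lemma sum_rev (f : nat -> rat) k :
  \sum_(i < k.+1) f (k - i)%N = \sum_(i < k.+1) f i.
Proof.
rewrite (reindex_inj rev_ord_inj) /=; apply: eq_bigr => i _.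
by rewrite subSS subKn // -ltnS.
Qed.

Lemma alt_bin M k : (0 < M)%N ->
  \sum_(i < k.+1) (-1) ^+ i * ('C(M, k - i))%:R = ('C(M.-1, k))%:R :> rat.
Proof.
case: M => // M _ /=; elim: k => [|k IH]; first by rewrite big_ord1 expr0 mul1r !bin0.
rewrite big_ord_recl expr0 mul1r subn0.
under eq_bigr do rewrite /bump /= ?add1n subSS exprS mulN1r mulNr.
by rewrite sumrN IH binS natrD addrK.
Qed.

Lemma combine (M k : nat) (Rf g Nf : nat -> rat) (qi : rat) : (0 < M)%N ->
  (forall i, (i <= k)%N ->
     Nf i = ('C(M, k - i))%:R * qi + (-1) ^+ (k - i) * Rf (k - i)%N * qi
            - (-1) ^+ (k - i) * g i) ->
  \sum_(i < k.+1) (-1) ^+ i * Nf i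
  = ('C(M.-1, k))%:R * qi + (-1) ^+ k * (\sum_(j < k.+1) Rf j) * qi
    - (-1) ^+ k * \sum_(i < k.+1) g i.
Proof.
move=> M0 H.
have sg : forall i : 'I_k.+1, (-1) ^+ i * (-1) ^+ (k - i) = (-1) ^+ k :> rat.
  by move=> i; rewrite -exprD subnKC // -ltnS.
rewrite (eq_bigr (fun i : 'I_k.+1 => (-1) ^+ i * ('C(M, k - i))%:R * qi
          + (-1) ^+ k * Rf (k - i)%N * qi - (-1) ^+ k * g i)); last first.
  move=> i _; rewrite H; last by rewrite -ltnS.
  rewrite !mulrDr mulrN !mulrA sg.
  by [].
rewrite sumrB big_split /= -!mulr_suml alt_bin // -!mulr_sumr.
by rewrite (sum_rev Rf k).
Qed.

Definition Dset (F : finFieldType) (a : nat -> F) (c : nat) : {set F} :=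
  [set x : F | x \notin [seq a i | i <- iota 1 c]].

Lemma S_eq (F : finFieldType) p (hp : p \in [pchar F]) k (e : F) :
  S p k e = \sum_(i < k.+1 | (i : nat)%:R == e) R1 p #|F| i.
Proof.
rewrite /S; case: ifP => // /negbT ex.
rewrite big1 // => i /eqP ei; exfalso; move/existsP: ex; apply.
have p0 : (0 < p)%N by apply: prime_gt0; apply: pcharf_prime hp.
exists (Ordinal (ltn_pmod i p0)); by rewrite /= (GRing.natr_mod_pchar hp) ei.
Qed.

Lemma Dset2 (F : finFieldType) (a : nat -> F) : a 1%N = 0 -> a 2%N = 1 ->
  Dset a 2 = (setT :\ 0) :\ 1.
Proof.
move=> h1 h2; apply/setP => x; rewrite !inE /= h1 h2 ?inE ?andbT.
by rewrite negb_or andbC.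
Qed.

Lemma Base (F : finFieldType) p (hp : p \in [pchar F]) (a : nat -> F)
  (ha1 : a 1%N = 0) (ha2 : a 2%N = 1) k (b : F) : (k <= #|F| - 2)%N ->
  (Ncount k b (Dset a 2))%:R
  = ('C(#|F| - 2, k))%:R * (#|F|%:R)^-1 + (-1) ^+ k * R p #|F| 2 k * (#|F|%:R)^-1
    - (-1) ^+ k * S p k (k%:R - b) :> rat.
Proof.
move=> kq.
have q2 : (1 < #|F|)%N := card_finNzRing_gt1 F.
rewrite Dset2 // Nconv; last by rewrite !inE andbT oner_neq0.
rewrite (combine (qi := (#|F|%:R)^-1) (M := #|F|.-1) (Rf := R1 p #|F|) (Nf := fun i => (Ncount (k - i) (b - i%:R * 1) (setT :\ 0))%:R)
   (g := fun i => (nat_of_bool (b - i%:R * 1 == 0))%:R * R1 p #|F| (k - i))); last first.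
    move=> i ik; rewrite (Nstar hp); last first.
      by apply: leq_ltn_trans (leq_subr _ _) _; apply: leq_ltn_trans kq _; rewrite ltn_subrL /= (ltnW q2).
    rewrite mulrBr addrA; congr (_ - _); by rewrite (mulrC (_%:R) (R1 _ _ _)) mulrA.
  by rewrite -ltnS prednK // ltnW.
rewrite subn2 /R /=; congr (_ - _ * _).
rewrite S_eq // [RHS]big_mkcond /= -[RHS](sum_rev (fun i => if (i%:R == k%:R - b :> F) then R1 p #|F| i else 0)); apply: eq_bigr => i _ /=.
have ik : (i <= k)%N by rewrite -ltnS.
rewrite mulr1 natrB // subr_eq0 (inj_eq (addrI _)) eqr_opp eq_sym.
by case: (_ == _); rewrite ?mul1r ?mul0r.
Qed.

Definition Gsum (F : finFieldType) p (a : nat -> F) n K k (e : F) : rat :=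
  \sum_(t : {ffun 'I_n -> 'I_K} | (\sum_(j < n) (t j : nat) <= k)%N)
     S p (k - \sum_(j < n) (t j : nat))%N
       ((k - \sum_(j < n) (t j : nat))%N%:R + e
        + \sum_(j < n) (t j : nat)%:R * a (n.+2 - j)%N).

Definition fcons n K (u : 'I_K * {ffun 'I_n -> 'I_K}) : {ffun 'I_n.+1 -> 'I_K} :=
  [ffun j : 'I_n.+1 => if unlift ord0 j is Some j' then u.2 j' else u.1].

Definition funcons n K (t : {ffun 'I_n.+1 -> 'I_K}) : 'I_K * {ffun 'I_n -> 'I_K} :=
  (t ord0, [ffun j => t (lift ord0 j)]).

Lemma fcons_bij n K : bijective (@fcons n K).
Proof.
exists (@funcons n K).
  case=> x t; rewrite /funcons /fcons /= ffunE unlift_none; congr (_, _).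
  by apply/ffunP => j; rewrite !ffunE liftK.
move=> t; apply/ffunP => j; rewrite /fcons /funcons ffunE /=.
case: unliftP => [j' ->|->]; by rewrite ?ffunE.
Qed.

Lemma fcons_sum (R : zmodType) n K (u : 'I_K * {ffun 'I_n -> 'I_K}) (f : nat -> nat -> R) :
  \sum_(j < n.+1) f j (fcons u j : nat) = f 0%N (u.1 : nat) + \sum_(j < n) f j.+1 (u.2 j : nat).
Proof.
rewrite big_ord_recl /fcons ffunE unlift_none; congr (_ + _).
by apply: eq_bigr => j _; rewrite ffunE liftK.
Qed.

Lemma fcons_sumn n K (u : 'I_K * {ffun 'I_n -> 'I_K}) :
  (\sum_(j < n.+1) (fcons u j : nat) = u.1 + \sum_(j < n) (u.2 j : nat))%N.
Proof.
rewrite big_ord_recl /fcons ffunE unlift_none; congr (_ + _)%N.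
by apply: eq_bigr => j _; rewrite ffunE liftK.
Qed.

Lemma Gsum0 (F : finFieldType) p (a : nat -> F) K k e :
  Gsum p a 0 K k e = S p k (k%:R + e).
Proof.
rewrite /Gsum (big_pred1 (ffun0 (card_ord 0))) /=.
  by rewrite !big_ord0 subn0 addr0.
move=> t; rewrite big_ord0 leq0n /=; apply/esym/eqP/ffunP => -[].
by [].
Qed.

Lemma Gsum_rec (F : finFieldType) p (a : nat -> F) n K k e : (k < K)%N ->
  Gsum p a n.+1 K k e = \sum_(i < k.+1) Gsum p a n K (k - i) (e + i%:R * a n.+3).
Proof.
move=> kK.
rewrite (big_ord_widen K (fun i => Gsum p a n K (k - i) (e + i%:R * a n.+3)) kK).
rewrite /Gsum (reindex _ (onW_bij _ (@fcons_bij n K))) /= pair_big_dep /=.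
apply: eq_big => [u|u _].
  rewrite fcons_sumn; case: u => x t /=.
  case: (leqP x k) => xk.
    by rewrite ltnS xk /= -[in RHS](leq_add2l x) subnKC.
  have -> : (x < k.+1)%N = false by rewrite ltnS leqNgt xk.
  rewrite andFb.
  by apply/negbTE; rewrite -ltnNge; apply: leq_trans xk (leq_addr _ _).
rewrite fcons_sumn subnDA (fcons_sum u (fun j x => x%:R * a (n.+3 - j)%N)) /= subn0.
rewrite !addrA; do 2 f_equal; apply: eq_bigr => j _; by rewrite subSS.
Qed.

Lemma Dset_S (F : finFieldType) (a : nat -> F) n :
  Dset a n.+1 = Dset a n :\ a n.+1.
Proof.
rewrite /Dset; have -> : iota 1 n.+1 = iota 1 n ++ [:: n.+1] by rewrite -[n.+1]addn1 iotaD /= add1n addn1.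
apply/setP => x; rewrite in_setD1 !in_set map_cat mem_cat mem_seq1 negb_or.
by rewrite andbC.
Qed.

Lemma Main (F : finFieldType) p (hp : p \in [pchar F]) (a : nat -> F)
  (ha1 : a 1%N = 0) (ha2 : a 2%N = 1) n :
  (forall i j : nat, (1 <= i <= n.+2)%N -> (1 <= j <= n.+2)%N -> a i = a j -> i = j) ->
  (n.+2 < #|F|)%N ->
  forall K k (b : F), (k < K)%N -> (k <= #|F| - n.+2)%N ->
  (Ncount k b (Dset a n.+2))%:R
  = ('C(#|F| - n.+2, k))%:R * (#|F|%:R)^-1 + (-1) ^+ k * R p #|F| n.+2 k * (#|F|%:R)^-1
    - (-1) ^+ k * Gsum p a n K k (- b) :> rat.
Proof.
elim: n => [|n IH] hinj nq K k b kK kq.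
  by rewrite (Base hp) // Gsum0.
have hinj' : forall i j : nat, (1 <= i <= n.+2)%N -> (1 <= j <= n.+2)%N -> a i = a j -> i = j.
  move=> i j /andP[i1 i2] /andP[j1 j2]; apply: hinj; rewrite ?i1 ?j1 /= ltnW //.
have aD : a n.+3 \in Dset a n.+2.
  rewrite inE; apply/mapP => -[i]; rewrite mem_iota add1n => /andP[i1 i2] E.
  have := hinj n.+3 i; rewrite leqnn i1 (ltnW i2) => /(_ isT isT E) Ei.
  by move: i2; rewrite -Ei ltnn.
rewrite Dset_S Nconv //.
rewrite (combine (qi := (#|F|%:R)^-1) (M := #|F| - n.+2) (Rf := R p #|F| n.+2)
   (Nf := fun i => (Ncount (k - i) (b - i%:R * a n.+3) (Dset a n.+2))%:R)
   (g := fun i => Gsum p a n K (k - i) (- (b - i%:R * a n.+3)))); last first.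
    move=> i ik; rewrite (IH hinj' (ltnW nq) K) //.
      by apply: leq_ltn_trans (leq_subr _ _) kK.
    apply: leq_trans (leq_subr _ _) _; apply: leq_trans kq _.
    by rewrite subnS leq_pred.
  by rewrite subn_gt0 ltnW.
rewrite -subnS; congr (_ - _ * _).
rewrite Gsum_rec //; apply: eq_bigr => i _.
by rewrite opprB addrC.
Qed.

Unset Implicit Arguments.
Theorem lemma4p2 (F : finFieldType) (p : nat) (hp : p \in [pchar F])
  (c : nat) (hc : (3 <= c)%N) (a : nat -> F)
  (ha1 : a 1%N = 0) (ha2 : a 2%N = 1)
  (hinj : forall i j : nat, (1 <= i <= c)%N -> (1 <= j <= c)%N ->
            a i = a j -> i = j) :
  let q := #|F| in
  let D := [set x : F | x \notin [seq a i | i <- iota 1 c]] in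
  (forall (k : nat) (b : F), (1 <= k <= q - c)%N ->
     (Ncount k b D)%:R - ('C(q - c, k))%:R / q%:R
     = q%:R^-1 * ((-1) ^+ k * R p q c k)
       - (-1) ^+ k *
         \sum_(t : {ffun 'I_(c - 2) -> 'I_k.+1} |
                 (\sum_(j < c - 2) (t j : nat) <= k)%N)
            S p (k - \sum_(j < c - 2) (t j : nat))%N
              ((k - \sum_(j < c - 2) (t j : nat))%N%:R - b
               + \sum_(j < c - 2) (t j : nat)%:R * a (c - j)%N))
  /\
  (forall (k : nat) (b : F), (1 <= k <= q - c)%N ->
     (forall (l0 : nat) (l : nat -> nat),
        l0%:R * b + \sum_(2 <= j < c.+1) (l j)%:R * a j = 0 ->
        l0%:R = 0 :> F /\ (forall j : nat, (2 <= j <= c)%N -> (l j)%:R = 0 :> F)) ->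
     (Ncount k b D)%:R
     = ('C(q - c, k))%:R / q%:R + q%:R^-1 * ((-1) ^+ k * R p q c k)).
Proof.
case: c hc hinj => [|[|n]] // hc hinj q D.
have P1 : forall (k : nat) (b : F), (1 <= k <= q - n.+2)%N ->
   (Ncount k b D)%:R = ('C(q - n.+2, k))%:R / q%:R + q%:R^-1 * ((-1) ^+ k * R p q n.+2 k)
       - (-1) ^+ k * Gsum p a n k.+1 k (- b).
  move=> k b /andP[k1 kq].
  have nq : (n.+2 < q)%N.
    by rewrite -subn_gt0; apply: leq_trans kq.
  rewrite (Main hp ha1 ha2 hinj nq (K := k.+1)) //.
  by rewrite [q%:R^-1 * _]mulrC.
split.
  move=> k b kq; rewrite P1 // [LHS]addrC addrA addKr.
  congr (_ - _ * _); rewrite /Gsum.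
  have E : (n.+2 - 2)%N = n by rewrite subn2.
  by rewrite E.
move=> k b kq hind; rewrite P1 //.
suff -> : Gsum p a n k.+1 k (- b) = 0 by rewrite mulr0 subr0.
rewrite /Gsum big1 // => t tk; rewrite /S ifN //; apply/negP => /existsP [i /eqP ei].
move: ei; set m := (k - \sum_(j < n) (t j : nat))%N; set T := \sum_(j < n) _ => ei.
have pm : forall x, ((p - 1) * x)%:R = - x%:R :> F.
  move=> x; rewrite natrM natrB ?prime_gt0 ?(pcharf_prime hp) // (pcharf0 hp) sub0r.
  by rewrite mulN1r.
pose l := fun j => ((if j == 2 then i + (p - 1) * m else 0)
   + (p - 1) * \sum_(j' < n) (if (n.+2 - j' == j)%N then (t j' : nat) else 0))%N.
have Hl : forall j, (l j)%:R * a j = (if j == 2%N then (i%:R - m%:R) * a j else 0)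
    - \sum_(j' < n) (if j == (n.+2 - j')%N then (t j' : nat)%:R * a j else 0) :> F.
  move=> j; rewrite /l natrD pm natr_sum mulrDl mulNr mulr_suml; congr (_ - _).
    by case: (j == 2%N); rewrite ?natrD ?pm ?mul0r.
  apply: eq_bigr => j' _; rewrite eq_sym; case: (_ == _); by rewrite ?mul0r.
have := hind 1%N l; case.
  rewrite (eq_bigr _ (fun j _ => Hl j)) sumrB.
  rewrite big_ltn // eqxx big_nat_cond big1 ?addr0; last first.
    by move=> j /andP[/andP[j3 _] _]; rewrite (gtn_eqF j3).
  rewrite exchange_big /=.
  rewrite (eq_bigr (fun j' : 'I_n => (t j' : nat)%:R * a (n.+2 - j')%N)); last first.
    move=> j' _; rewrite -big_mkcond big_nat1_eq.
    have jn : (j' <= n)%N by apply: ltnW.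
    rewrite ltnS leq_subr andbT ltn_subRL addn1 !ltnS jn //.
  rewrite -/T mulr1n mul1r ha2 mulr1.
  by rewrite -ei addrAC addrK addrAC subrr add0r addrN.
by move=> /eqP; rewrite ?mulr1n oner_eq0.
Qed.
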